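(* Let $\mathcal{T}$ be a class of trees. If $\mathcal{T}$ is not matching splittable, then $\mathcal{T}$ has unbounded fork number, or unbounded star number, or unbounded $\mathrm{C}$-number.
   Context: Let $T$ be a tree. A $2$-path of length $a$ is a path $x_0,\dots,x_a$ with $\deg(x_0)\ne 2$, $\deg(x_1)=\dots=\deg(x_{a-1})=2$, $\deg(x_a)\ne2$. A source is a vertex of degree $>2$. A ray of length $a$ is a $2$-path $x_0,\dots,x_a$ with $\deg(x_0)>2$ and $\deg(x_a)=1$; $x_0$ is its source. For a source $s$, $\deg_{\mathcal{L}}^a(s)$ is the number of rays of length $a$ with source $s$, $\deg_{\mathcal{L}}(s)=\sum_a\deg_{\mathcal{L}}^a(s)$, and $\deg_{\overline{\mathcal{L}}}(s)=\deg(s)-\deg_{\mathcal{L}}(s)$. Forks: for positive integers $a,b$, a source $s$ is an $a$-$b$-fork if $\deg_{\overline{\mathcal{L}}}(s)=1$ and either $a\ne b$ and $\deg_{\mathcal{L}}^a(s),\deg_{\mathcal{L}}^b(s)>0$, or $a=b$ and $\deg_{\mathcal{L}}^a(s)>1$. $\mathrm{F}_{a,b}(T)$ is the maximum size of an independent set consisting of $a$-$b$-forks. A class $\mathcal{T}$ has unbounded fork number if for every $B$ there are $a,b$ and $T\in\mathcal{T}$ with $\mathrm{F}_{a,b}(T)\ge B$. Stars: for $c\ge3$, a $c$-star of size $k$ is a collection of $k$ distinct rays of length $c$ with a common source; $\mathrm{S}_c(T)$ is the maximum size of a $c$-star in $T$. $\mathcal{T}$ has unbounded star number if for every $B$ there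 exist $c\ge3$ and $T\in\mathcal{T}$ with $\mathrm{S}_c(T)\ge B$. C-gadgets: a $\mathrm{C}$-gadget of order $d$ and length $k$ is a path $x_0,\dots,x_k$ in $T$ such that each inner vertex $x_i$ ($1\le i\le k-1$) either has $\deg(x_i)=2$, or is a source such that every neighbour $v\in N(x_i)\setminus\{x_{i-1},x_{i+1}\}$ is contained in a ray of length at most $d$ from $x_i$ to a leaf. $\mathrm{C}_d(T)$ is the length of the longest $\mathrm{C}$-gadget of order $d$ in $T$. $\mathcal{T}$ has unbounded $\mathrm{C}$-number if there exists $d>0$ such that for every $B$ there is $T\in\mathcal{T}$ with $\mathrm{C}_d(T)\ge B$. The matching-split number of a graph $H$ is the minimum size of $S\subseteq V(H)$ such that every vertex of $H[V(H)\setminus S]$ has degree at most $1$; $\mathcal{T}$ is matching splittable if this number is bounded over $\mathcal{T}$. *)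

(* Defs.v *)
From mathcomp Require Import all_boot.
Set Implicit Arguments. Unset Strict Implicit. Unset Printing Implicit Defensive.

Section TreeDefs.
Variables (V : finType) (e : rel V).

Definition is_tree : Prop :=
  [/\ 0 < #|V|, symmetric e, irreflexive e, (forall x y, connect e x y) &
      (forall c : seq V, ucycle e c -> size c < 3)].

Definition deg (v : V) : nat := #|[set u | e v u]|.

Definition source (v : V) : bool := 2 < deg v.

(* [is_ray s t] : s :: t = x_0, x_1, ..., x_a is a ray of length a = size t
   with source s: a (simple) path, deg x_0 > 2, deg x_a = 1 and the inner
   vertices x_1..x_{a-1} have degree 2. *)
Definition is_ray (s : V) (t : seq V) : bool :=
  [&& path e s t, uniq (s :: t), source s, deg (last s t) == 1 &
      all (fun x => deg x == 2) (take (size t).-1 t)].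

Definition degLa (s : V) (a : nat) : nat := #|[set t : a.-tuple V | is_ray s t]|.

(* deg_L(s) = sum_a deg_L^a(s); rays are simple paths, so a <= #|V| *)
Definition degL (s : V) : nat := \sum_(a < #|V|.+1) degLa s a.

Definition degLbar (s : V) : nat := deg s - degL s.

Definition is_fork (a b : nat) (s : V) : bool :=
  [&& source s, degLbar s == 1 &
      if a != b then (0 < degLa s a) && (0 < degLa s b) else 1 < degLa s a].

Definition independent (S : {set V}) : bool :=
  [forall x in S, forall y in S, ~~ e x y].

Definition Fab (a b : nat) : nat :=
  \max_(S : {set V} | independent S && [forall s in S, is_fork a b s]) #|S|.

Definition is_star (c : nat) (R : {set c.-tuple V}) : bool :=
  [exists s : V, [forall t in R, is_ray s t]].

Definition Sc (c : nat) : nat :=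
  \max_(R : {set c.-tuple V} | is_star R) #|R|.

(* condition on an inner vertex x (with path-neighbours xp, xn) of a C-gadget of order d *)
Definition gadget_inner_ok (d : nat) (xp x xn : V) : bool :=
  (deg x == 2) ||
  (source x &&
   [forall v, (e x v && (v != xp) && (v != xn)) ==>
      [exists a : 'I_d.+1, [exists r : a.-tuple V, is_ray x r && (v \in r)]]]).

(* x0 :: q = x_0, ..., x_k (k = size q) is a C-gadget of order d and length k *)
Definition is_gadget (d : nat) (x0 : V) (q : seq V) : bool :=
  [&& path e x0 q, uniq (x0 :: q) &
      [forall i : 'I_(size q), (0 < i) ==>
         gadget_inner_ok d (nth x0 (x0 :: q) i.-1) (nth x0 (x0 :: q) i)
                           (nth x0 (x0 :: q) i.+1)]].

(* C_d(T): longest C-gadget of order d (simple paths have length < #|V|) *)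
Definition Cd (d : nat) : nat :=
  \max_(k < #|V| | [exists x0 : V, [exists q : k.-tuple V, is_gadget d x0 q]]) k.

Definition msplit : nat :=
  \big[minn/#|V|]_(S : {set V} |
      [forall v in ~: S, #|[set u in ~: S | e v u]| <= 1]) #|S|.

End TreeDefs.

(* Main.v *)
Require Import Defs.
From mathcomp Require Import all_boot.
From mathcomp Require Import zify.
From Stdlib Require Import Classical.
Set Implicit Arguments. Unset Strict Implicit. Unset Printing Implicit Defensive.

Section CardH.
Variable T : finType.
Lemma nb1 (N : {set T}) a y : #|N| <= 1 -> a \in N -> y \in N -> y = a.
Proof.
move=> H Ha Hy; apply/eqP/negPn/negP => Hne.
have : #|[set a; y]| <= #|N|.
  by apply: subset_leq_card; apply/subsetP => z; rewrite !inE => /orP[]/eqP->.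
by rewrite cards2 eq_sym Hne; lia.
Qed.
Lemma nb2 (N : {set T}) a b y : #|N| <= 2 -> a \in N -> b \in N -> y \in N ->
  a != b -> y = a \/ y = b.
Proof.
move=> H Ha Hb Hy Hab; case: (eqVneq y a) => [->|Hya]; first by left.
case: (eqVneq y b) => [->|Hyb]; first by right.
have : #|[set y; a; b]| <= #|N|.
  by apply: subset_leq_card; apply/subsetP => z; rewrite !inE => /orP[/orP[]|]/eqP->.
rewrite -setUA cardsU1 cards2 Hab !inE negb_or Hya Hyb /=; lia.
Qed.
Lemma card_bigcup_le (I : finType) (P : pred I) (F : I -> {set T}) :
  #|\bigcup_(i | P i) F i| <= \sum_(i | P i) #|F i|.
Proof.
elim/big_rec2: _ => [|i n X _ H]; first by rewrite cards0.
rewrite cardsU; apply: leq_trans (leq_subr _ _) _; lia.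
Qed.
Lemma bigmin_le (I : finType) (P : pred I) (F : I -> nat) m i0 :
  P i0 -> \big[minn/m]_(i | P i) F i <= F i0.
Proof.
move=> Pi; have : i0 \in index_enum I by rewrite mem_index_enum.
elim: (index_enum I) => [|j r IH] //; rewrite inE big_cons => /orP[/eqP<-|/IH H].
  by rewrite Pi geq_minl.
by case: (P j) => //; apply: leq_trans (geq_minr _ _) H.
Qed.
Lemma sum_ind (A : {set T}) (b : pred T) :
  \sum_(v in A) (b v : nat) = #|[set v in A | b v]|.
Proof.
rewrite -sum1_card big_mkcond /= [in RHS]big_mkcond /=; apply: eq_bigr => v _.
by rewrite !inE; case: (v \in A); case: (b v).
Qed.
End CardH.

Lemma split_ex (T : eqType) (y : T) s : y \in s -> exists s1 s2, s = s1 ++ y :: s2.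
Proof. by case/splitPr => s1 s2; exists s1, s2. Qed.

Section Tree.
Variables (V : finType) (e : rel V).
Hypothesis tree : is_tree e.

Lemma e_sym : symmetric e. Proof. by case: tree. Qed.
Lemma e_irr : irreflexive e. Proof. by case: tree. Qed.
Lemma e_conn x y : connect e x y. Proof. by case: tree. Qed.
Lemma e_acyc c : ucycle e c -> size c < 3. Proof. by case: tree => _ _ _ _; apply. Qed.

Lemma ext_uniq x p y : uniq (x :: p) -> path e x p -> e (last x p) y ->
  y != last x (belast x p) -> uniq (x :: rcons p y).
Proof.
move=> Up Pp Ey Ny.
rewrite -rcons_cons rcons_uniq Up andbT; apply/negP => Yin.
have [s1 [s2 Es]] := split_ex Yin.
have Ps : sorted e (s1 ++ y :: s2) by rewrite -Es.
have Hl : last x p = last y s2.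
  by rewrite -(last_cons x x p) Es last_cat.
move: Ps; rewrite sorted_cat_cons => /andP[_ P2].
have Uc : uniq (y :: s2) by move: Up; rewrite Es cat_uniq => /and3P[].
have : ucycle e (y :: s2) by rewrite /ucycle Uc andbT /= rcons_path P2 -Hl Ey.
move/e_acyc => /=.
case: s2 Es Hl P2 Uc => [|z [|w s2]] //= Es Hl _ _ _.
  by move: Ey; rewrite Hl e_irr.
have : rcons (belast x p) (last x p) = rcons (rcons s1 y) z.
  by rewrite -lastI Es -!cats1 -catA.
rewrite Hl => /rcons_inj; case => Eb.
by move: Ny; rewrite Eb last_rcons eqxx.
Qed.


Definition degin (A : {set V}) v := #|[set u in A | e v u]|.
Definition apath (A : {set V}) x p :=
  [&& path e x p, uniq (x :: p) & all (fun u => u \in A) (x :: p)].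

Lemma uniq_size x (p : seq V) : uniq (x :: p) -> size p < #|V|.
Proof. by move=> U; have := max_card (mem (x :: p)); rewrite (card_uniqP U). Qed.

Lemma max_apath (A : {set V}) x : x \in A -> exists p, apath A x p /\
  forall q, apath A x q -> size q <= size p.
Proof.
move=> Ax.
pose P n := [exists q : n.-tuple V, apath A x q].
have exP : exists n, P n.
  by exists 0; apply/existsP; exists [tuple]; rewrite /apath /= Ax.
have ubP : forall n, P n -> n <= #|V|.
  move=> n /existsP [q /and3P [_ U _]]; have := uniq_size U; rewrite size_tuple; lia.
case: (ex_maxnP exP ubP) => n /existsP [q Hq] Hmax.
exists q; split => // q' Hq'; rewrite size_tuple; apply: Hmax.
by apply/existsP; exists (in_tuple q').
Qed.

Definition maxap (A : {set V}) x p := apath A x p /\ forall q, apath A x q -> size q <= size p.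

Lemma max_end (A : {set V}) x p y : maxap A x p -> y \in A -> e (last x p) y ->
  y = last x (belast x p).
Proof.
move=> [/and3P [Pp Up Ap] Hm] Ay Ey; apply/eqP/negPn/negP => Ny.
have U := ext_uniq Up Pp Ey Ny.
have : apath A x (rcons p y).
  rewrite /apath rcons_path Pp Ey U /= all_rcons Ay.
  by move: Ap => /= /andP [-> ->].
by move/Hm; rewrite size_rcons ltnn.
Qed.

Lemma max_end_deg (A : {set V}) x p : maxap A x p -> degin A (last x p) <= 1.
Proof.
move=> H; apply: leq_trans (_ : #|[set last x (belast x p)]| <= 1); last by rewrite cards1.
apply: subset_leq_card; apply/subsetP => y; rewrite !inE => /andP [Ay Ey].
by rewrite (max_end H Ay Ey).
Qed.

Lemma inner_nbrs x p (u : V) : uniq (x :: p) -> path e x p -> u \in p -> u != last x p ->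
  exists a b, [/\ a \in x :: p, b \in x :: p, a != b, e u a & e u b].
Proof.
move=> Up Pp Hu Hl; have [s1 [s2 Es]] := split_ex Hu.
move: Up Pp Hl; rewrite Es; case: s2 {Es} => [|b s2].
  by rewrite last_cat /= eqxx.
move=> Up Pp _; move: Pp; rewrite cat_path /= => /and3P [_ E1 /andP [E2 _]].
exists (last x s1), b; split.
- by rewrite -cat_cons mem_cat mem_last.
- by rewrite -cat_cons mem_cat !inE eqxx !orbT.
- move: Up; rewrite -cat_cons cat_uniq => /and3P [_ H _].
  apply/eqP => Eab; move: H; rewrite /= negb_or => /andP [_ /negP]; apply.
  by rewrite -Eab mem_last.
- by rewrite e_sym.
- by [].
Qed.

Lemma closure (A : {set V}) w p : (forall v, v \in A -> degin A v <= 2) -> degin A w <= 1 ->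
  maxap A w p -> forall u y, u \in w :: p -> y \in A -> e u y -> y \in w :: p.
Proof.
move=> Hd Hw Hm u y Hu Ay Euy.
have [/and3P [Pp Up Ap] _] := Hm.
have inA z : z \in w :: p -> z \in A by move=> Hz; move/allP: Ap; apply.
case: (eqVneq u (last w p)) => [Eu|Nu].
  rewrite (max_end Hm Ay); last by rewrite -Eu.
  by move: (mem_last w (belast w p)); rewrite inE => /orP [/eqP->|/mem_belast]; rewrite ?inE ?eqxx.
move: Hu; rewrite inE => /orP [/eqP Eu|Hu].
  subst u; case: p Pp Up Ap Hm Nu inA => [|b p] Pp Up Ap Hm Nu inA; first by rewrite eqxx in Nu.
  move: Pp => /= /andP [Ewb _].
  have Ab : b \in A by apply: inA; rewrite !inE eqxx orbT.
  have := nb1 Hw (_ : b \in _) (_ : y \in _); rewrite !inE Ab Ay Ewb Euy => H.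
  by rewrite (H erefl erefl) eqxx orbT.
have [a [b [Ha Hb Nab Ea Eb]]] := inner_nbrs Up Pp Hu Nu.
have Au : u \in A by apply: inA; rewrite inE Hu orbT.
have := nb2 (Hd u Au) (_ : a \in _) (_ : b \in _) (_ : y \in _) Nab.
rewrite !inE (inA a Ha) (inA b Hb) Ay Ea Eb Euy => H.
by case: (H erefl erefl erefl) => ->.
Qed.


Lemma degin_w (A : {set V}) v w : v \in A :\ w -> w \in A ->
  degin A v = degin (A :\ w) v + e v w.
Proof.
move=> Hv Hw; rewrite /degin (cardsD1 w [set u in A | e v u]) inE Hw /= addnC.
congr (_ + _); apply: eq_card => u; rewrite !inE; by case: (u == w); case: (u \in A).
Qed.

Lemma exists_end (A : {set V}) x : x \in A -> exists w, w \in A /\ degin A w <= 1.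
Proof.
move=> Ax; have [p [Hp Hm]] := max_apath Ax.
exists (last x p); split; last by apply: max_end_deg.
by case/and3P: Hp => _ _ /allP; apply; rewrite mem_last.
Qed.

Lemma forest_bound (A : {set V}) : A != set0 -> \sum_(v in A) degin A v + 2 <= 2 * #|A|.
Proof.
move: {2}#|A|.+1 (ltnSn #|A|) => n; elim: n A => [//|n IH] A HA.
case/set0Pn => x Ax.
have [w [Aw Hw]] := exists_end Ax.
rewrite (bigD1 w) //=.
have -> : \sum_(i in A | i != w) degin A i = \sum_(i in A :\ w) degin (A :\ w) i + degin A w.
  rewrite (eq_bigl (fun i => i \in A :\ w)); last by move=> i; rewrite !inE andbC.
  rewrite (eq_bigr (fun i => degin (A :\ w) i + e i w)); last by move=> i Hi; apply: degin_w.
  rewrite big_split /=; congr (_ + _); rewrite sum_ind /degin; apply: eq_card => u.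
  rewrite !inE e_sym; case: (eqVneq u w) => [->|]; by rewrite ?e_irr ?andbF.
have Hc := cardsD1 w A; rewrite Aw in Hc.
case: (eqVneq (A :\ w) set0) => [E0|N0].
  have -> : degin A w = 0.
    apply/eqP; rewrite cards_eq0; apply/eqP/setP => u; rewrite !inE.
    apply/negP => /andP [Au Ewu]; have : u \in A :\ w.
      by rewrite !inE Au andbT; apply/eqP => Eu; rewrite Eu e_irr in Ewu.
    by rewrite E0 inE.
  rewrite big_pred0 => [|i]; last by rewrite E0 inE.
  by rewrite Hc E0 cards0 /=.
have HA' : #|A :\ w| < n by move: HA; rewrite Hc; lia.
have := IH (A :\ w) HA' N0; rewrite Hc /=; lia.
Qed.

Definition ends (A : {set V}) := [set v in A | degin A v <= 1].

Lemma chain_bound K (A : {set V}) : (forall v, v \in A -> degin A v <= 2) ->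
  (forall x p, apath A x p -> size p < K) -> #|A| <= K * #|ends A|.
Proof.
move: {2}#|A|.+1 (ltnSn #|A|) => n; elim: n A => [//|n IH] A HA Hd HK.
case: (set_0Vmem A) => [->|[x Ax]]; first by rewrite cards0.
have [w0 [Aw0 Hw0]] := exists_end Ax.
have [p [Hp Hm]] := max_apath Aw0.
have Hm' : maxap A w0 p by [].
set X := [set u | u \in w0 :: p].
have Hcl := closure Hd Hw0 Hm'.
case/and3P: Hp => Pp Up Ap.
have XA : X \subset A by apply/subsetP => u; rewrite inE => Hu; move/allP: Ap; apply.
have cX : #|X| = (size p).+1 by rewrite cardsE (card_uniqP Up).
have HX : #|X| <= K by rewrite cX; apply: (HK w0); rewrite /apath Pp Up Ap.
have cA : #|A| = #|A :\: X| + #|X|.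
  by rewrite -(cardsID X A) addnC (setIidPr XA).
have degE v : v \in A :\: X -> degin (A :\: X) v = degin A v.
  rewrite in_setD => /andP [vX vA]; apply: eq_card => u; rewrite !in_set.
  case: (boolP (u \in w0 :: p)) => //= uX; apply/esym/negP => /andP [uA Evu].
  move/negP: vX; apply; rewrite inE; apply: (Hcl u v uX vA); by rewrite e_sym.
have wX : w0 \in X by rewrite inE mem_head.
have Hends : ends (A :\: X) \subset ends A :\ w0.
  apply/subsetP => v; rewrite !inE => /andP [/andP [vX vA] Hv].
  have := degE v; rewrite !inE vX vA => /(_ erefl) E; rewrite E in Hv.
  by rewrite Hv andbT; move: vX; rewrite negb_or => /andP [-> _].
have cE : #|ends (A :\: X)| < #|ends A|.
  apply: leq_trans (_ : #|ends A :\ w0|.+1 <= _).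
    by rewrite ltnS; apply: subset_leq_card.
  by rewrite (cardsD1 w0 (ends A)) inE Aw0 Hw0.
have IHA : #|A :\: X| <= K * #|ends (A :\: X)|.
  apply: IH.
  - by move: HA; rewrite cA cX; lia.
  - by move=> v Hv; rewrite degE //; apply: Hd; move: Hv; rewrite inE => /andP [].

  - move=> y q /and3P [Pq Uq Aq]; apply: (HK y); rewrite /apath Pq Uq !andTb.
    by apply/allP => u /(allP Aq); rewrite inE => /andP [].
rewrite cA; apply: leq_trans (_ : K * #|ends (A :\: X)| + K <= _); first lia.
by rewrite -mulnSr leq_mul2l cE orbT.
Qed.


Lemma take_rcons_size (s : seq V) z : take (size (rcons s z)).-1 (rcons s z) = s.
Proof. by rewrite size_rcons /= -cats1 take_size_cat. Qed.

Lemma ray_nonnil s t : is_ray e s t -> t != [::].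
Proof.
case: t => // /and5P [_ _ Hs Hl _]; move: Hs Hl; rewrite /source /= => Hs /eqP Hl; lia.
Qed.

Lemma ray_source s t : is_ray e s t -> source e s.
Proof. by case/and5P. Qed.

Lemma ray_inner s t x : is_ray e s t -> x \in t -> x != last s t -> deg e x = 2.
Proof.
case/lastP: t => [|t z] //; rewrite /is_ray take_rcons_size last_rcons => /and5P [_ _ _ _ Ha].
by rewrite mem_rcons inE => /orP [/eqP->|Hx]; [rewrite eqxx | move/allP: Ha => /(_ x Hx) /eqP].
Qed.

Lemma ray_last s t : is_ray e s t -> deg e (last s t) = 1.
Proof. by case/and5P => _ _ _ /eqP. Qed.

Lemma ray_tdeg s t x : is_ray e s t -> x \in t -> deg e x <= 2.
Proof.
move=> H Hx; case: (eqVneq x (last s t)) => [->|N]; first by rewrite (ray_last H).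
by rewrite (ray_inner H Hx N).
Qed.

Lemma tail_nb s t1 x t2 y : is_ray e s (t1 ++ x :: t2) -> e x y ->
  y = last s t1 \/ y \in t2.
Proof.
move=> H Exy; have := H; case/and5P => Pt Ut _ _ _.
move: Pt; rewrite cat_path /= => /and3P [_ Eax Pt2].
have Hxa : e x (last s t1) by rewrite e_sym.
move: Ut; rewrite -cat_cons cat_uniq => /and3P [_ Hd /= /andP [xt2 _]].
case: t2 H Pt2 Hd xt2 => [|b t2] H Pt2 Hd xt2.
  left; have Hd1 := ray_last H; rewrite last_cat /= in Hd1.
  have := @nb1 _ [set u | e x u] (last s t1) y; rewrite !inE Hxa Exy; apply => //.
  by move: Hd1; rewrite /deg => ->.
have Nl : x != last s (t1 ++ x :: b :: t2).
  rewrite last_cat /=; apply: contraNneq xt2 => ->; exact: mem_last.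
have Hd2 : deg e x = 2 by apply: (ray_inner H) => //; rewrite mem_cat mem_head orbT.
have Nab : last s t1 != b.
  apply: contraNneq Hd => <-; apply/hasP; exists (last s t1); first by rewrite !inE eqxx orbT.
  exact: mem_last.
move: Pt2 => /= /andP [Exb _].
have := @nb2 _ [set u | e x u] _ _ y _ _ _ _ Nab; rewrite !inE Hxa Exb Exy.
move: Hd2; rewrite /deg => -> /(_ erefl erefl erefl erefl).
by case => ->; [left|right; rewrite ?inE ?eqxx].
Qed.

Lemma tail_nb' s t x y : is_ray e s t -> x \in t -> e x y -> y \in s :: t.
Proof.
move=> H Hx Exy; have [t1 [t2 Et]] := split_ex Hx; clear Hx; subst t.
case: (tail_nb H Exy) => [->|Hy].
  by move: (mem_last s t1); rewrite !inE mem_cat => /orP [->|->] //; rewrite orbT.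
by rewrite inE mem_cat inE Hy !orbT.
Qed.

Definition R := [set x | [exists s, exists a : 'I_#|V|.+1, exists t : a.-tuple V,
  is_ray e s t && (x \in t)]].

Lemma inR x : reflect (exists s t, is_ray e s t /\ x \in t) (x \in R).
Proof.
apply: (iffP idP).
  by rewrite inE => /existsP [s /existsP [a /existsP [t /andP [H1 H2]]]]; exists s, t.
move=> [s [t [H Hx]]]; rewrite inE; apply/existsP; exists s.
have Hs : size t < #|V|.+1.
  by case/and5P: H => _ U _ _ _; have := uniq_size U; lia.
apply/existsP; exists (Ordinal Hs); apply/existsP; exists (in_tuple t); by rewrite H.
Qed.

Lemma source_notR s : source e s -> s \notin R.
Proof.
move=> Hs; apply/negP => /inR [s' [t [H Hx]]]; have := ray_tdeg H Hx.
by move: Hs; rewrite /source; lia.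
Qed.

Lemma nbR s u : source e s -> e s u -> u \in R -> exists t, is_ray e s (u :: t).
Proof.
move=> Hs Esu /inR [s' [t [H Hx]]]; have [t1 [t2 Et]] := split_ex Hx; clear Hx; subst t.
have Eus : e u s by rewrite e_sym.
have nR y : y \in t1 ++ u :: t2 -> y != s.
  move=> Hy; apply: contraTneq Hy => ->; apply/negP => Hin.
  by move/negP: (source_notR Hs); apply; apply/inR; exists s', (t1 ++ u :: t2).
case: (tail_nb H Eus) => [Es|Hy]; last first.
  by have := nR s; rewrite mem_cat inE Hy !orbT eqxx => /(_ erefl).
case: t1 H nR Es => [|b t1] H nR /= Es.
  by subst s'; exists t2.
have := nR (last b t1); rewrite Es eqxx mem_cat => H'; exfalso; apply: notF; apply: H'.
by rewrite mem_last.
Qed.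

Lemma gadget_gen d x0 q : path e x0 q -> uniq (x0 :: q) ->
  (forall xp x xn, e xp x -> e x xn -> xp != xn -> x \in q -> x != last x0 q ->
     xp \in x0 :: q -> xn \in q -> gadget_inner_ok e d xp x xn) ->
  is_gadget e d x0 q.
Proof.
move=> Pq Uq H; rewrite /is_gadget Pq Uq /=; apply/forallP => i; apply/implyP => Hi.
have Hsz : i < size q := ltn_ord i.
have E1 : nth x0 (x0 :: q) i = nth x0 q i.-1 by case: (nat_of_ord i) Hi.
have E2 : nth x0 (x0 :: q) i.+1 = nth x0 q i by [].
have Hn : i.-1 < size q by lia.
move/pathP: Pq => Pq.
apply: H.
- by rewrite E1; apply: Pq.
- by apply: Pq.
- by rewrite -[nth x0 q i]/(nth x0 (x0 :: q) i.+1) (nth_uniq x0 _ _ Uq) /=; lia.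
- by rewrite E1 mem_nth.
- have Uq' : uniq q by case/andP: Uq.
  rewrite E1 -nth_last (nth_uniq x0 _ _ Uq').
  + by move: Hi Hsz; move: (nat_of_ord i) => k; lia.
  + exact: Hn.
  + by rewrite ltn_predL (leq_ltn_trans (leq0n _) Hsz).
- by rewrite mem_nth //= ltnS (leq_trans (leq_pred _) (ltnW Hsz)).
- by rewrite ?E2 mem_nth.
Qed.

Lemma gadget_Cd d x0 q : is_gadget e d x0 q -> size q <= Cd e d.
Proof.
move=> H; have Hs : size q < #|V| by case/and3P: H => _ U _; apply: uniq_size U.
rewrite /Cd; apply: (@leq_bigmax_cond _ _ (fun k : 'I_#|V| => nat_of_ord k) (Ordinal Hs)).
by apply/existsP; exists x0; apply/existsP; exists (in_tuple q).
Qed.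

Lemma ray_gadget d s t : is_ray e s t -> is_gadget e d s t.
Proof.
move=> H; have := H; case/and5P => Pt Ut _ _ _; apply: gadget_gen => // xp x xn _ _ _ Hx Nl _ _.
by rewrite /gadget_inner_ok (ray_inner H Hx Nl) eqxx.
Qed.

Lemma ray_len d s t : is_ray e s t -> size t <= Cd e d.
Proof. by move/(ray_gadget d)/gadget_Cd. Qed.


Lemma ar1 a c L : a <= c -> c < L -> a < L.+2. Proof. lia. Qed.
Lemma arI1 n : (n != 2) * n + 6 <= 7 * (n <= 1) + 3 * n.
Proof. by case: n => [|[|[|n]]] //=; lia. Qed.
Lemma arI2 n : (2 < n) + 2 <= 2 * (n <= 1) + 1 * n.
Proof. by case: n => [|[|[|n]]] //=; lia. Qed.
Lemma arI3 n : 1 <= (n <= 1) + ((n == 2) + (2 < n)).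
Proof. by case: n => [|[|[|n]]] //=; lia. Qed.
Lemma ar_final SF SC SG SL SH SD K E LB :
  SF + 2 <= 2 * SC -> SG + SC * 6 <= 7 * SL + 3 * SF -> SH + SC * 2 <= 2 * SL + 1 * SF ->
  SC <= SL + (SD + SH) -> SD <= K * E -> E <= SG -> SL <= LB ->
  SC <= 1 + (3 + 7 * K) * LB.
Proof.
move=> H1 H2 H3 H4 H5 H6 H7.
have HG : E <= 7 * LB by lia.
have : K * E <= K * (7 * LB) by rewrite leq_mul2l HG orbT.
have HH : SH <= 2 * LB by lia.
rewrite mulnDl mulnCA mulnA; lia.
Qed.

Lemma ray_det p x t1 t2 : path e x t1 -> path e x t2 -> uniq [:: p, x & t1] ->
  uniq [:: p, x & t2] -> e p x ->
  (forall y, y \in x :: t1 -> y != last x t1 -> deg e y = 2) -> deg e (last x t1) = 1 ->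
  (forall y, y \in x :: t2 -> y != last x t2 -> deg e y = 2) -> deg e (last x t2) = 1 ->
  t1 = t2.
Proof.
elim: t1 p x t2 => [|y t1 IH] p x [|z t2] //= P1 P2 U1 U2 Epx I1 L1 I2 L2.
- have Nx : x != last z t2.
    apply: contraTneq U2 => ->; by rewrite mem_last /= ?andbF.
  by have := I2 x (mem_head _ _) Nx; rewrite L1.
- have Nx : x != last y t1.
    apply: contraTneq U1 => ->; by rewrite mem_last /= ?andbF.
  by have := I1 x (mem_head _ _) Nx; rewrite L2.
have Nx : x != last y t1.
  apply: contraTneq U1 => ->; by rewrite mem_last /= ?andbF.
have Dx := I1 x (mem_head _ _) Nx.
move: P1 P2 => /andP [Exy P1] /andP [Exz P2].
have Npy : p != y by apply: contraTneq U1 => ->; rewrite /= !inE eqxx !orbT.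
have Exp : e x p by rewrite e_sym.
have := @nb2 _ [set u | e x u] p y z _ _ _ _ Npy; rewrite !inE Exp Exy Exz.
move: Dx; rewrite /deg => -> /(_ erefl erefl erefl erefl) [Ez|Ez].
  by move: U2; rewrite Ez /= !inE eqxx orbT.
subst z; congr (_ :: _); apply: (IH x y) => //.
- by case/andP: U1.
- by case/andP: U2.
- by move=> w Hw Nw; apply: I1 => //; rewrite inE Hw orbT.
- by move=> w Hw Nw; apply: I2 => //; rewrite inE Hw orbT.
Qed.

Lemma ray_det' s u t1 t2 : is_ray e s (u :: t1) -> is_ray e s (u :: t2) -> t1 = t2.
Proof.
move=> H1 H2; have := H1; have := H2; case/and5P => /= /andP [Esu P2] U2 _ _ _.
case/and5P => /= /andP [_ P1] U1 _ _ _.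
apply: (ray_det (p := s) (x := u)) => //.
- by move=> y Hy Ny; apply: (ray_inner H1).
- exact: (ray_last H1).
- by move=> y Hy Ny; apply: (ray_inner H2).
- exact: (ray_last H2).
Qed.

Definition C := ~: R.
Definition degc v := degin C v.

Lemma rays_card s a : degLa e s a = #|[set t : a.-tuple V | is_ray e s t]|.
Proof. by []. Qed.

Lemma degL_heads s : source e s -> degL e s = #|[set u | e s u & u \notin C]|.
Proof.
move=> Hs.
pose A (a : 'I_#|V|.+1) := [set t : a.-tuple V | is_ray e s t].
pose H (a : 'I_#|V|.+1) := [set head s (val t) | t in A a].
have cH a : #|H a| = degLa e s a.
  rewrite card_in_imset //= => t1 t2; rewrite !inE => R1 R2 Eh; apply: val_inj => /=.
  move: R1 R2 Eh; case: t1 => [[|u1 t1'] S1] /= R1; first by move: (ray_nonnil R1).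
  case: t2 => [[|u2 t2'] S2] /= R2; first by move: (ray_nonnil R2).
  move=> Eu; subst u2; congr (_ :: _); exact: ray_det' R1 R2.
have dH a b : a != b -> [disjoint H a & H b].
  move=> Nab; rewrite -setI_eq0; apply/eqP/setP => u; rewrite !inE.
  apply/negP => /andP [/imsetP [t1 T1 ->] /imsetP [t2 T2 Et]]; move: T1 T2 Et; rewrite !inE.
  case: t1 => [[|u1 t1'] /= S1] R1; first by move: (ray_nonnil R1).
  case: t2 => [[|u2 t2'] /= S2] R2; first by move: (ray_nonnil R2).
  move=> /= Eu; subst u2; have E := ray_det' R1 R2; subst t2'.
  by move/negP: Nab; apply; apply/eqP/val_inj => /=; move/eqP: S1 => <-; move/eqP: S2 => <-.
have -> : [set u | e s u & u \notin C] = \bigcup_a H a.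
  apply/setP => u; rewrite !inE; apply/idP/bigcupP.
  - case/andP => Esu HuC; have HuR : u \in R by move: HuC; rewrite /C inE negbK.
    have [t Ht] := nbR Hs Esu HuR.
    have Hsz : size (u :: t) < #|V|.+1.
      by case/and5P: Ht => _ U _ _ _; have := uniq_size U; lia.
    exists (Ordinal Hsz) => //; apply/imsetP; exists (in_tuple (u :: t)) => //.
    by rewrite inE.
  - move=> [a _ /imsetP [t]]; rewrite inE => Rt ->.
    case: t Rt => [[|u1 t1] /= St] Rt; first by move: (ray_nonnil Rt).
    case/and5P: (Rt) => /= /andP [-> _] _ _ _ _; rewrite negbK /=.
    have HR : u1 \in R by apply/inR; exists s, (u1 :: t1); rewrite mem_head.
    by move: HR; rewrite inE.
rewrite -sum1_card (partition_disjoint_bigcup _ _ dH) /degL.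
apply: eq_bigr => a _; by rewrite sum1_card cH.
Qed.

Lemma degLbar_eq s : source e s -> degLbar e s = degc s.
Proof.
move=> Hs; rewrite /degLbar (degL_heads Hs) /degc /degin /deg.
rewrite -(cardsID C [set u | e s u]).
have -> : [set u | e s u] :&: C = [set u in C | e s u] by apply/setP => u; rewrite !inE andbC.
have -> : [set u | e s u] :\: C = [set u | e s u & u \notin C] by apply/setP => u; rewrite !inE andbC.
by rewrite addnK.
Qed.


Lemma all_from (P : V -> Prop) x0 : P x0 -> (forall u w, P u -> e u w -> P w) ->
  forall y, P y.
Proof.
move=> H0 Hs y; have /connectP [q Pq ->] := e_conn x0 y.
elim: q x0 H0 Pq => //= w q IH x0 H0 /andP [E Pq]; exact: IH (Hs _ _ H0 E) Pq.
Qed.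

Lemma degin_T v : degin [set: V] v = deg e v.
Proof. by rewrite /degin /deg; apply: eq_card => u; rewrite !inE. Qed.

Lemma inner_closed (B : {set V}) x p u w : uniq (x :: p) -> path e x p ->
  all (fun z => z \in B) (x :: p) -> u \in x :: p -> u != last x p ->
  degin B x <= 1 -> (forall u', u' \in p -> degin B u' <= 2) -> w \in B -> e u w ->
  w \in x :: p.
Proof.
move=> Up Pp Ap Hu Nu Hx Hp Bw Euw.
have inB z : z \in x :: p -> z \in B by move=> Hz; move/allP: Ap; apply.
move: Hu; rewrite inE => /orP [/eqP Eu|Hu].
  subst u; case: p Pp Up Ap Nu inB Hp => [|b p] Pp Up Ap Nu inB Hp; first by rewrite eqxx in Nu.
  move: Pp => /= /andP [Exb _].
  have Bb : b \in B by apply: inB; rewrite !inE eqxx orbT.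
  have := nb1 Hx (_ : b \in _) (_ : w \in _); rewrite !inE Bb Bw Exb Euw => H.
  by rewrite (H erefl erefl) eqxx orbT.
have [a [b [Ha Hb Nab Ea Eb]]] := inner_nbrs Up Pp Hu Nu.
have := nb2 (Hp u Hu) (_ : a \in _) (_ : b \in _) (_ : w \in _) Nab.
rewrite !inE (inB a Ha) (inB b Hb) Bw Ea Eb Euw => H.
by case: (H erefl erefl erefl) => ->.
Qed.

Lemma inC x : (x \in C) = (x \notin R).
Proof. by rewrite /C inE. Qed.

Lemma spider s : source e s -> degc s = 0 -> forall x, x \in C -> x = s.
Proof.
move=> Hs H0.
pose P x := x = s \/ exists t, is_ray e s t /\ x \in t.
have HP : forall y, P y.
  apply: (all_from (x0 := s)); first by left.
  move=> u w [->|[t [Ht Hu]]] Euw.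
  - have wR : w \in R.
      apply/negPn/negP => wC; move/eqP: H0; rewrite cards_eq0 => /eqP /setP /(_ w).
      by rewrite in_set0 in_set inC wC Euw.
    have [t Ht] := nbR Hs Euw wR; right; exists (w :: t); by rewrite mem_head.
  - move: (tail_nb' Ht Hu Euw); rewrite inE => /orP [/eqP ->|Hw]; [by left|by right; exists t].
move=> x; rewrite inC => xR; case: (HP x) => // [[t [Ht Hxt]]].
by move/negP: xR; case; apply/inR; exists s, t.
Qed.

Lemma last_in x (p : seq V) : p != [::] -> last x p \in p.
Proof. by case: p => // a p _; rewrite /= mem_last. Qed.

Lemma pred_nbr x (p : seq V) : p != [::] -> path e x p ->
  e (last x (belast x p)) (last x p) /\ last x (belast x p) \in x :: p.
Proof.
case/lastP: p => // p z _; rewrite rcons_path belast_rcons last_rcons /= => /andP [_ H].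
split => //; move: (mem_last x p); rewrite !inE mem_rcons !inE => /orP [->//|->].
by rewrite !orbT.
Qed.

Lemma leaf_walk v : deg e v = 1 -> v \in R \/ ((forall x, deg e x <= 2) /\ #|V| <= (Cd e 1).+1).
Proof.
move=> Hv.
pose A := v |: [set u | deg e u == 2].
have Av : v \in A by rewrite !inE eqxx.
have HdA u : u \in A -> deg e u <= 2 by rewrite !inE => /orP [/eqP ->|/eqP ->]; rewrite ?Hv.
have degA u : degin A u <= deg e u.
  by apply: subset_leq_card; apply/subsetP => w; rewrite !inE => /andP [].
have [p [Hp Hm]] := max_apath Av; have Hm' : maxap A v p by [].
have := Hp; case/and3P => Pp Up Ap.
have inA z : z \in v :: p -> z \in A by move=> Hz; move/allP: Ap; apply.
have degp u : u \in p -> deg e u = 2.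
  move=> Hu; have := inA u; rewrite inE Hu orbT !inE => /(_ erefl) /orP [/eqP Euv|/eqP //].
  by move: Up; rewrite -Euv /= Hu.
set z := last v p.
have [y Ezy yA] : exists2 y, e z y & y \notin A.
  case: (boolP [exists y, e z y && (y \notin A)]) => [/existsP [y /andP [H1 H2]]|Hno].
    by exists y.
  exfalso.
  have allA y : e z y -> y \in A.
    by move=> Ey; move/existsPn: Hno => /(_ y); rewrite Ey /= negbK.
  have Hle : deg e z <= degin A z.
    by apply: subset_leq_card; apply/subsetP => w; rewrite in_set => Ew; rewrite in_set Ew allA.
  have Hle1 := max_end_deg Hm'.
  case: (eqVneq p [::]) => [Ep|Np].
    have : 0 < #|[set u | e v u]| by rewrite -/(deg e v) Hv.
    case/card_gt0P => w; rewrite inE => Evw.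
    have Ezw : e z w by rewrite /z Ep.
    have := max_end Hm' (allA w Ezw) Ezw; rewrite Ep /= => Ew; subst w.
    by rewrite e_irr in Evw.
  have := degp _ (last_in v Np); rewrite -/z => Dz; move: Hle Hle1; rewrite Dz -/z; lia.
have yX : y \notin v :: p by apply: contra yA; apply: inA.
have Ny2 : deg e y != 2 by move: yA; rewrite !inE negb_or => /andP [_].
case: (leqP 3 (deg e y)) => Hy.
  left; apply/inR; exists y, (rev (v :: p)); split; last by rewrite mem_rev mem_head.
  rewrite /is_ray.
  have -> : path e y (rev (v :: p)).
    rewrite lastI rev_rcons /= rev_path -/z (e_sym y z) Ezy /=.
    by rewrite (eq_path (e' := e)) // => a b; rewrite e_sym.
  rewrite /= rev_uniq mem_rev yX Up /source Hy /=.
  rewrite rev_cons last_rcons Hv eqxx /= take_rcons_size.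
  by apply/allP => x; rewrite mem_rev => /degp ->.
right.
have Hy1 : deg e y <= 1 by move: Ny2 Hy; lia.
have Eyz : e y z by rewrite e_sym.
have HdA' u : u \in A -> degin A u <= 2 by move=> Hu; apply: leq_trans (degA u) (HdA u Hu).
have HvA : degin A v <= 1 by apply: leq_trans (degA v) _; rewrite Hv.
have Hcl := closure HdA' HvA Hm'.
pose Q := v :: rcons p y.
have inQ x : x \in v :: p -> x \in Q by rewrite !inE mem_rcons !inE => /orP [->|->]; rewrite ?orbT.
have HQ : forall x, x \in Q.
  apply: (all_from (x0 := v)); first by rewrite mem_head.
  move=> u w; rewrite /Q -rcons_cons mem_rcons inE => /orP [/eqP ->|Hu] Euw.
    have := @nb1 _ [set x | e y x] z w; rewrite !inE Eyz Euw => /(_ Hy1 erefl erefl) ->.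
    by apply: inQ; rewrite /z mem_last.
  case: (boolP (w \in A)) => wA; first by apply: inQ; apply: (Hcl u).
  case: (eqVneq u z) => [Euz|Nuz]; last first.
    apply: inQ; apply: (inner_closed (B := [set: V])) Euw => //.
    + by apply/allP => x _; rewrite inE.
    + by rewrite degin_T Hv.
    + by move=> u' Hu'; rewrite degin_T degp.
  subst u.
  case: (eqVneq p [::]) => [Ep|Np].
    have Ezv : z = v by rewrite /z Ep.
    have Dz : #|[set x | e z x]| <= 1 by rewrite -/(deg e z) Ezv Hv.
    have Ew : w = y by apply: (@nb1 _ [set x | e z x] y w Dz); rewrite inE.
    by rewrite Ew mem_rcons mem_head.
  have [Epz Pin] := pred_nbr Np Pp.
  have Npy : last v (belast v p) != y by apply: contraNneq yX => <-.
  have Dz : #|[set x | e z x]| <= 2 by rewrite -/(deg e z) (degp _ (last_in v Np)).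
  have : w = last v (belast v p) \/ w = y.
    by apply: (@nb2 _ [set x | e z x] _ _ w Dz) => //; rewrite inE // e_sym.
  case => Ew; first by move: wA; rewrite Ew (inA _ Pin).
  by rewrite Ew mem_rcons mem_head.
split.
  move=> x; move: (HQ x); rewrite /Q -rcons_cons mem_rcons inE => /orP [/eqP ->//|/inA].
  exact: HdA.
have HV : #|V| <= size Q.
  apply: leq_trans (card_size Q); apply: subset_leq_card; apply/subsetP => x _; exact: HQ.
have Hg : is_gadget e 1 v (rcons p y).
  apply: gadget_gen.
  - by rewrite rcons_path Pp Ezy.
  - by rewrite -rcons_cons rcons_uniq yX Up.
  - move=> xp x xn _ _ _ Hx Nx _ _; move: Hx Nx; rewrite last_rcons mem_rcons inE.
    by case/orP => [/eqP ->|/degp Hx]; [rewrite eqxx | rewrite /gadget_inner_ok Hx].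
have := gadget_Cd Hg; move: HV; rewrite /Q /= size_rcons; lia.
Qed.


Lemma msplit_le (S : {set V}) :
  [forall v in ~: S, #|[set u in ~: S | e v u]| <= 1] -> msplit e <= #|S|.
Proof. by move=> H; rewrite /msplit; apply: (bigmin_le (fun S : {set V} => #|S|)). Qed.

Lemma msplit_V : msplit e <= #|V|.
Proof.
rewrite -cardsT; apply: msplit_le; apply/forall_inP => v; by rewrite !inE.
Qed.

Lemma deg_pos v w : v != w -> 0 < deg e v.
Proof.
move=> Nvw; have /connectP [q Pq Ew] := e_conn v w.
case: q Pq Ew => [|a q] /=; first by move=> _ E; rewrite E eqxx in Nvw.
case/andP => Eva _ _; apply/card_gt0P; exists a; by rewrite inE.
Qed.

Lemma degc_le v : degc v <= deg e v.
Proof. by apply: subset_leq_card; apply/subsetP => u; rewrite !inE => /andP []. Qed.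

Lemma deg2_core v : v \in C -> deg e v = 2 -> degc v = 2.
Proof.
move=> vC Hv; rewrite /degc /degin -Hv /deg; apply: eq_card => u; rewrite !inE.
case: (boolP (e v u)); rewrite ?andbF ?andbT // => Evu.
apply/negP => HuR; have : u \in R by rewrite inE.
case/inR => s [t [Ht Hu]].
have Euv : e u v by rewrite e_sym.
move: (tail_nb' Ht Hu Euv); rewrite inE => /orP [/eqP Evs|Hvt].
  by move: (ray_source Ht); rewrite /source -Evs Hv.
by move: vC; rewrite inC => /negP; apply; apply/inR; exists s, t.
Qed.

Definition mk_tuple a (t : seq V) (H : size t == a) : a.-tuple V := Tuple H.

Lemma degLa_pos s t : is_ray e s t -> 0 < degLa e s (size t).
Proof. by move=> H; apply/card_gt0P; exists (in_tuple t); rewrite inE. Qed.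

Lemma degLa0 s : degLa e s 0 = 0.
Proof.
apply/eqP; rewrite cards_eq0; apply/eqP/setP => t; rewrite !inE.
by apply/negP => /ray_nonnil; rewrite (tuple0 t).
Qed.

Lemma fork_pos a b s : is_fork e a b s -> 0 < a /\ 0 < b.
Proof.
case/and3P => _ _; case: (eqVneq a b) => [<-|_] /=.
  by case: a => [|a]; rewrite ?degLa0.
by case/andP; case: a => [|a]; rewrite ?degLa0 //; case: b => [|b]; rewrite ?degLa0.
Qed.

Lemma fork_exists L s : Cd e 1 < L -> source e s -> degc s = 1 ->
  exists a b : 'I_L, is_fork e a b s.
Proof.
move=> HL Hs Hc.
have Hh : 1 < #|[set u | e s u & u \notin C]|.
  have := degLbar_eq Hs; rewrite Hc /degLbar (degL_heads Hs) => H.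
  by move: Hs; rewrite /source; lia.
case/card_gt1P: Hh => u1 [u2 []]; rewrite !inE => /andP [E1 C1] /andP [E2 C2] N12.
have {}C1 : u1 \in R by move: C1; rewrite negbK inE.
have {}C2 : u2 \in R by move: C2; rewrite negbK inE.
have [t1 R1] := nbR Hs E1 C1; have [t2 R2] := nbR Hs E2 C2.
have S1 : size (u1 :: t1) < L by apply: leq_ltn_trans (ray_len 1 R1) HL.
have S2 : size (u2 :: t2) < L by apply: leq_ltn_trans (ray_len 1 R2) HL.
exists (Ordinal S1), (Ordinal S2); rewrite /is_fork Hs (degLbar_eq Hs) Hc /=.
case: (eqVneq (size t1).+1 (size t2).+1) => [Es|Ns] /=.
  apply/card_gt1P.
  have H2 : size (u2 :: t2) == (size t1).+1 by rewrite /= Es.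
  exists (in_tuple (u1 :: t1)), (mk_tuple H2); rewrite !inE R1 R2; split => //.
  apply/negP => /eqP /(f_equal val) /= [] E; by rewrite E eqxx in N12.
by rewrite (degLa_pos R1) (degLa_pos R2).
Qed.

Lemma half_indep (F : {set V}) : F \subset C -> (forall v, v \in F -> degc v <= 1) ->
  exists I : {set V}, [/\ I \subset F, independent e I & #|F| <= 2 * #|I|].
Proof.
move=> FC HF.
pose I := [set x in F | [forall y in F, e x y ==> (enum_rank x < enum_rank y)]].
have IF : I \subset F by apply/subsetP => x; rewrite inE => /andP [].
exists I; split => //.
  apply/forall_inP => x xI; apply/forall_inP => y yI; apply/negP => Exy.
  move: xI yI; rewrite !inE => /andP [xF /forall_inP Hx] /andP [yF /forall_inP Hy].
  have := Hx y yF; rewrite Exy /= => H1; have := Hy x xF; rewrite e_sym Exy /= => H2.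
  by move: H1 H2; lia.
have HFI : F :\: I \subset \bigcup_(y in I) [set x in F | e y x].
  apply/subsetP => x; rewrite inE => /andP [xnI xF].
  have : ~~ [forall y in F, e x y ==> (enum_rank x < enum_rank y)].
    by move: xnI; rewrite inE xF.
  case/forall_inPn => y yF; rewrite negb_imply => /andP [Exy Hr].
  have Nxy : x != y by apply: contraTneq Exy => ->; rewrite e_irr.
  have yI : y \in I.
    rewrite inE yF; apply/forall_inP => y' y'F; apply/implyP => Eyy'.
    have yC : y \in C by apply: (subsetP FC).
    have := @nb1 _ [set u in C | e y u] x y' (HF y yF).
    have Hx : x \in [set u in C | e y u] by rewrite in_set (subsetP FC _ xF) e_sym Exy.
    have Hy' : y' \in [set u in C | e y u] by rewrite in_set (subsetP FC _ y'F) Eyy'.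
    move=> /(_ Hx Hy') ->.
    move: Hr; rewrite -leqNgt => Hr; rewrite ltn_neqAle Hr andbT.
    by apply: contra Nxy => /eqP /val_inj /enum_rank_inj ->.
  by apply/bigcupP; exists y => //; rewrite inE xF e_sym Exy.
have : #|F :\: I| <= #|I|.
  apply: leq_trans (subset_leq_card HFI) _; apply: leq_trans (card_bigcup_le _ _) _.
  rewrite -sum1_card; apply: leq_sum => y yI.
  apply: leq_trans (HF y (subsetP IF y yI)); apply: subset_leq_card; apply/subsetP => x.
  by rewrite in_set => /andP [xF Eyx]; rewrite in_set (subsetP FC _ xF) Eyx.
have := cardsID I F; rewrite (setIidPr IF); lia.
Qed.

Lemma fab_ge a b (I : {set V}) : independent e I -> (forall s, s \in I -> is_fork e a b s) ->
  #|I| <= Fab e a b.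
Proof.
move=> HI Hf; rewrite /Fab; apply: (leq_bigmax_cond (F := fun S : {set V} => #|S|)) => /=.
by rewrite HI; apply/forall_inP.
Qed.

Lemma sc_ge c s : #|[set t : c.-tuple V | is_ray e s t]| <= Sc e c.
Proof.
rewrite /Sc; apply: (leq_bigmax_cond (F := fun R : {set c.-tuple V} => #|R|)) => /=.
by apply/existsP; exists s; apply/forall_inP => t; rewrite inE.
Qed.


Lemma sum_lin (A : {set V}) (F : V -> nat) a b :
  \sum_(v in A) (a * F v + b) = a * \sum_(v in A) F v + #|A| * b.
Proof. by rewrite big_split /= sum_nat_const big_distrr. Qed.

Lemma sum_lin2 (A : {set V}) (F G : V -> nat) a b :
  \sum_(v in A) (a * F v + b * G v) = a * \sum_(v in A) F v + b * \sum_(v in A) G v.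
Proof. by rewrite big_split /= !big_distrr. Qed.

Lemma core_size_dummy : True. Proof. by []. Qed.

Lemma core_size B1 K L : Cd e 1 < L -> Cd e L.+1 < K ->
  (forall a b, 0 < a -> 0 < b -> Fab e a b < B1) -> forall s0, source e s0 ->
  #|C| <= 1 + (3 + 7 * K) * (L * (L * (2 * B1))).
Proof.
move=> HL HK HF s0 Hs0.
case: (boolP [exists s, source e s && (degc s == 0)]) => [/existsP [s /andP [Hs /eqP H0]]|Hns].
  have : C \subset [set s] by apply/subsetP => x xC; rewrite inE (spider Hs H0 xC).
  move/subset_leq_card; rewrite cards1; lia.
have nonsp s : source e s -> 0 < degc s.
  move=> Hs; move/existsPn: Hns => /(_ s); rewrite Hs /=; lia.
have twoV (v : V) : exists w, v != w.
  case: (eqVneq v s0) => [->|N]; last by exists s0.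
  have : 0 < deg e s0 by move: Hs0; rewrite /source; lia.
  case/card_gt0P => u; rewrite inE => Eu; exists u; apply: contraTneq Eu => <-; by rewrite e_irr.
have Hlo v : v \in C -> degc v <= 1 -> source e v /\ degc v = 1.
  move=> vC Hv; have [w Nw] := twoV v; have Dp := deg_pos Nw.
  case: (ltngtP (deg e v) 2) => Hd.
  - have Hd1 : deg e v = 1 by lia.
    case: (leaf_walk Hd1) => [vR|[Hall _]]; first by move: vC; rewrite inC vR.
    by move: (Hall s0) Hs0; rewrite /source; lia.
  - have Hs : source e v by rewrite /source.
    by split => //; have := nonsp v Hs; lia.
  - by move: Hv; rewrite (deg2_core vC Hd).
have s0C : s0 \in C by rewrite inC source_notR.
have CC : C != set0 by apply/set0Pn; exists s0.
set Lo := [set v in C | degc v <= 1].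
set D2 := [set v in C | degc v == 2].
set Hi := [set v in C | 2 < degc v].
have HLo : #|Lo| <= L * (L * (2 * B1)).
  pose Fs (a b : 'I_L) := [set v in Lo | is_fork e a b v].
  have sub : Lo \subset \bigcup_(a : 'I_L) \bigcup_(b : 'I_L) Fs a b.
    apply/subsetP => v vLo; have := vLo; rewrite inE => /andP [vC Hv].
    have [Hs Hc] := Hlo v vC Hv.
    have [a [b Hab]] := fork_exists HL Hs Hc.
    by apply/bigcupP; exists a => //; apply/bigcupP; exists b => //; rewrite inE vLo.
  apply: leq_trans (subset_leq_card sub) _; apply: leq_trans (card_bigcup_le _ _) _.
  rewrite -[L in L * _]card_ord -sum_nat_const; apply: leq_sum => a _.
  apply: leq_trans (card_bigcup_le _ _) _.
  rewrite -[L in L * _]card_ord -sum_nat_const; apply: leq_sum => b _.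
  have FC : Fs a b \subset C by apply/subsetP => v; rewrite !inE => /andP [/andP [-> _] _].
  have Fd v : v \in Fs a b -> degc v <= 1 by rewrite !inE => /andP [/andP [_ ->] _].
  have [I [IF HI HFI]] := half_indep FC Fd.
  apply: leq_trans HFI _; rewrite leq_mul2l /=.
  case: (set_0Vmem I) => [->|[s sI]]; first by rewrite cards0.
  have Hf : forall s, s \in I -> is_fork e a b s.
    by move=> s' s'I; move: (subsetP IF s' s'I); rewrite inE => /andP [].
  have [Ha Hb] := fork_pos (Hf s sI).
  by apply: ltnW; apply: leq_ltn_trans (fab_ge HI Hf) (HF a b Ha Hb).
have D2C : D2 \subset C by apply/subsetP => v; rewrite inE => /andP [].
have HD2 : #|D2| <= K * #|ends D2|.
  apply: chain_bound.
  - move=> v vD; apply: leq_trans (_ : degin C v <= 2).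
      by apply: subset_leq_card; apply/subsetP => u; rewrite !inE => /andP [/andP [-> _] ->].
    by move: vD; rewrite inE => /andP [_ /eqP <-].
  - move=> x p /and3P [Pp Up Ap]; apply: leq_ltn_trans HK.
    apply: (@gadget_Cd _ x); apply: gadget_gen => // xp y xn Exy Eyn Npn Hy _ Hxp Hxn.
    have inD z : z \in x :: p -> z \in D2 by move=> Hz; move/allP: Ap; apply.
    have yD : y \in D2 by apply: inD; rewrite inE Hy orbT.

    have xpD := inD xp Hxp.
    have xnD : xn \in D2 by apply: inD; rewrite inE Hxn orbT.
    have := yD; rewrite inE => /andP [yC /eqP Hcy].
    rewrite /gadget_inner_ok; case: (eqVneq (deg e y) 2) => // Hdy; rewrite orFb.
    have Hge := degc_le y; rewrite Hcy in Hge.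
    have Hsy : source e y by rewrite /source ltn_neqAle eq_sym Hdy Hge.
    rewrite Hsy andTb; apply/forallP => u; apply/implyP => /andP [/andP [Eyu Nu1] Nu2].
    have uR : u \in R.
      rewrite -[u \in R]negbK -inC; apply/negP => uC.
      have Hn2 : #|[set w in C | e y w]| <= 2 by rewrite -/(degin C y) -/(degc y) Hcy.
      have xpC := subsetP D2C _ xpD; have xnC := subsetP D2C _ xnD.
      have M1 : xp \in [set w in C | e y w] by rewrite in_set xpC e_sym Exy.
      have M2 : xn \in [set w in C | e y w] by rewrite in_set xnC Eyn.
      have M3 : u \in [set w in C | e y w] by rewrite in_set uC Eyu.
      have := @nb2 _ [set w in C | e y w] xp xn u Hn2 M1 M2 M3 Npn.
      by case => Eu; [move: Nu1 | move: Nu2]; rewrite Eu eqxx.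
    have [t Ht] := nbR Hsy Eyu uR.
    have Hsz : size (u :: t) < L.+2 by apply: (ar1 (ray_len 1 Ht) HL).
    apply/existsP; exists (Ordinal Hsz); apply/existsP; exists (in_tuple (u :: t)).
    by rewrite Ht mem_head.
have Hends : #|ends D2| <= \sum_(v in C) (degc v != 2) * degc v.
  have sub : ends D2 \subset \bigcup_(w in C | degc w != 2) [set u in C | e w u].
    apply/subsetP => v; rewrite /ends in_set => /andP [vD Hv1].
    have vC : v \in C by apply: (subsetP D2C).
    have Hv2 : degc v = 2 by move: vD; rewrite /D2 in_set => /andP [_ /eqP].
    have : [set u in D2 | e v u] \proper [set u in C | e v u].
      rewrite properEcard; apply/andP; split.
        apply/subsetP => u; rewrite in_set => /andP [uD Evu].
        by rewrite in_set (subsetP D2C _ uD) Evu.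
      by rewrite -/(degin C v) -/(degc v) Hv2.
    case/properP => _ [w wB wnA].
    have wC : w \in C by move: wB; rewrite in_set => /andP [].
    have Evw : e v w by move: wB; rewrite in_set => /andP [].
    have wnD : w \notin D2 by apply: contra wnA => wD; rewrite in_set wD Evw.
    apply/bigcupP; exists w.
      by rewrite wC andTb; apply: contra wnD => /eqP H; rewrite /D2 in_set wC H.
    by rewrite in_set vC e_sym Evw.
  apply: leq_trans (subset_leq_card sub) _; apply: leq_trans (card_bigcup_le _ _) _.
  rewrite big_mkcondr /=; apply: leq_sum => w _.
  by case: (degc w != 2); rewrite ?mul1n.
have Hfor := forest_bound CC.
have I1 : \sum_(v in C) ((degc v != 2) * degc v + 6) <=
          \sum_(v in C) (7 * (degc v <= 1) + 3 * degc v).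
  by apply: leq_sum => v _; apply: arI1.
have I2 : \sum_(v in C) ((2 < degc v) + 2) <= \sum_(v in C) (2 * (degc v <= 1) + 1 * degc v).
  by apply: leq_sum => v _; apply: arI2.
have I3 : \sum_(v in C) 1 <= \sum_(v in C) ((degc v <= 1) + ((degc v == 2) + (2 < degc v))).
  by apply: leq_sum => v _; apply: arI3.
rewrite big_split /= sum_nat_const sum_lin2 in I1.
rewrite big_split /= sum_nat_const sum_lin2 in I2.
rewrite big_split /= big_split /= sum1_card in I3.
rewrite !sum_ind -/Lo -/D2 -/Hi in I1 I2 I3.
exact: (ar_final Hfor I1 I2 I3 HD2 Hends HLo).
Qed.


Definition SH := [set x | [exists s, exists a : 'I_3, exists t : a.-tuple V,
  is_ray e s t && (x \in t)]].

Lemma inSH x : reflect (exists s t, [/\ is_ray e s t, size t <= 2 & x \in t]) (x \in SH).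
Proof.
apply: (iffP idP).
  rewrite inE => /existsP [s /existsP [a /existsP [t /andP [H1 H2]]]].
  by exists s, t; split => //; rewrite size_tuple; have := ltn_ord a; lia.
move=> [s [t [H Hs Hx]]]; rewrite inE; apply/existsP; exists s.
have Hs' : size t < 3 by [].
apply/existsP; exists (Ordinal Hs'); apply/existsP; exists (in_tuple t); by rewrite H.
Qed.

Lemma S_valid : [forall v in ~: (~: SH), #|[set u in ~: (~: SH) | e v u]| <= 1].
Proof.
apply/forall_inP => v; rewrite setCK => /inSH [s [t [Ht Hsz Hv]]].
have sSH : s \notin SH.
  apply/negP => /inSH [s' [t' [Ht' _ Hs]]]; have := ray_tdeg Ht' Hs.
  by move: (ray_source Ht); rewrite /source; lia.
have sub : [set u in SH | e v u] \subset [set u in t] :\ v.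
  apply/subsetP => u; rewrite in_set => /andP [uSH Evu].
  have := tail_nb' Ht Hv Evu; rewrite inE => /orP [/eqP Eus|ut].
    by move: uSH; rewrite Eus (negbTE sSH).
  rewrite in_setD1 in_set ut andbT; apply: contraTneq Evu => ->; by rewrite e_irr.
apply: leq_trans (subset_leq_card sub) _.
have := cardsD1 v [set u in t]; rewrite in_set Hv cardsE add1n => E.
have := card_size t.
move=> H; move: (leq_trans H Hsz); rewrite E ltnS.
by [].
Qed.

Lemma ar2 s a b Cb X L : s <= a + b -> b <= a * X -> a <= Cb -> s <= L + Cb * (1 + X).
Proof.
move=> H1 H2 H3; have : a * X <= Cb * X by rewrite leq_mul2r H3 orbT.
rewrite mulnDr muln1; lia.
Qed.

Lemma core_bound B1 B2 L K :
  (forall a b, 0 < a -> 0 < b -> Fab e a b < B1) ->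
  (forall c, 2 < c -> Sc e c < B2) ->
  Cd e 1 < L -> Cd e L.+1 < K ->
  msplit e <= L + (1 + (3 + 7 * K) * (L * (L * (2 * B1)))) * (1 + L * (L * B2)).
Proof.
move=> HF HS HL HK.
case: (boolP [exists s, source e s]) => [/existsP [s0 Hs0]|Hno]; last first.
  apply: leq_trans msplit_V _; apply: leq_trans (_ : #|V| <= L) (leq_addr _ _).
  have L1 : 0 < L by apply: leq_ltn_trans (leq0n _) HL.
  case: (leqP #|V| 1) => HV; first by apply: leq_trans HV L1.
  have : 1 < #|[set: V]| by rewrite cardsT.
  case/card_gt1P => x [y [_ _ Nxy]].
  have [w [_ Hw]] := @exists_end [set: V] x (in_setT x).
  rewrite degin_T in Hw.
  have [z Nz] : exists z, w != z.
    by case: (eqVneq w x) => [->|N]; [exists y | exists x].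
  have Hw1 : deg e w = 1 by apply/eqP; rewrite eqn_leq Hw (deg_pos Nz).
  case: (leaf_walk Hw1) => [/inR [s [t [Ht _]]]|[_ H]].
    by move/existsPn: Hno => /(_ s); rewrite (ray_source Ht).
  exact: leq_trans H HL.
have HC := core_size HL HK HF Hs0.
apply: leq_trans (msplit_le S_valid) _.
pose LR := \bigcup_(s in C) \bigcup_(c : 'I_L | 2 < c)
   \bigcup_(t in [set t : c.-tuple V | is_ray e s t]) [set x in t].
have sub : ~: SH \subset C :|: LR.
  apply/subsetP => x; rewrite in_setC => xS; rewrite in_setU.
  case: (boolP (x \in C)) => //= xC.
  have xR : x \in R by move: xC; rewrite inC negbK.
  case/inR: xR => s [t [Ht Hx]].
  have Hlt : size t < L by apply: leq_ltn_trans (ray_len 1 Ht) HL.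
  have H2 : 2 < size t.
    rewrite ltnNge; apply/negP => H; move/negP: xS; apply; apply/inSH; by exists s, t.
  have sC : s \in C by rewrite inC source_notR // (ray_source Ht).
  apply/bigcupP; exists s => //; apply/bigcupP; exists (Ordinal Hlt) => //.
  by apply/bigcupP; exists (in_tuple t); rewrite inE.
have cLR : #|LR| <= #|C| * (L * (L * B2)).
  apply: leq_trans (card_bigcup_le _ _) _; rewrite -sum_nat_const; apply: leq_sum => s _.
  apply: leq_trans (card_bigcup_le _ _) _.
  apply: leq_trans (_ : \sum_(c : 'I_L | 2 < c) (L * B2) <= _).
    apply: leq_sum => c Hc; apply: leq_trans (card_bigcup_le _ _) _.
    apply: leq_trans (_ : \sum_(t in [set t : c.-tuple V | is_ray e s t]) L <= _).
      apply: leq_sum => t _; rewrite cardsE; apply: leq_trans (card_size t) _.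
      by rewrite size_tuple ltnW.
    rewrite sum_nat_const mulnC leq_mul2l; apply/orP; right.
    exact: ltnW (leq_ltn_trans (sc_ge c s) (HS c Hc)).
  rewrite sum_nat_cond_const leq_mul2r; apply/orP; right.
  by apply: leq_trans (max_card _) _; rewrite card_ord.
apply: (@ar2 _ _ _ _ _ _ _ cLR HC).
apply: leq_trans (subset_leq_card sub) _; rewrite cardsU; apply: leq_subr.
Qed.

End Tree.

Theorem lemma32 (C : forall V : finType, rel V -> Prop)
  (HC : forall (V : finType) (e : rel V), C V e -> is_tree e) :
  ~ (exists M : nat, forall (V : finType) (e : rel V), C V e -> msplit e <= M) ->
  (forall B : nat, exists a b : nat, [/\ 0 < a, 0 < b &
      exists (V : finType) (e : rel V), C V e /\ B <= Fab e a b])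
  \/ (forall B : nat, exists c : nat, 2 < c /\
      exists (V : finType) (e : rel V), C V e /\ B <= Sc e c)
  \/ (exists d : nat, 0 < d /\ forall B : nat,
      exists (V : finType) (e : rel V), C V e /\ B <= Cd e d).
Proof.
move=> Hnot; apply: NNPP => Hn; apply: Hnot.
have [B1 HF] : exists B1, forall a b, 0 < a -> 0 < b ->
    forall (V : finType) (e : rel V), C V e -> Fab e a b < B1.
  apply: NNPP => H; apply: Hn; left => B; apply: NNPP => H2; apply: H; exists B.
  move=> a b Ha Hb V e HCe; rewrite ltnNge; apply/negP => Hle; apply: H2.
  by exists a, b; split => //; exists V, e.
have [B2 HS] : exists B2, forall c, 2 < c ->
    forall (V : finType) (e : rel V), C V e -> Sc e c < B2.
  apply: NNPP => H; apply: Hn; right; left => B; apply: NNPP => H2; apply: H; exists B.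
  move=> c Hc V e HCe; rewrite ltnNge; apply/negP => Hle; apply: H2.
  by exists c; split => //; exists V, e.
have HD : forall d, 0 < d -> exists Bd, forall (V : finType) (e : rel V), C V e -> Cd e d < Bd.
  move=> d Hd; apply: NNPP => H; apply: Hn; right; right; exists d; split => // B.
  apply: NNPP => H2; apply: H; exists B => V e HCe; rewrite ltnNge; apply/negP => Hle.
  by apply: H2; exists V, e.
have [L HL] := HD 1 erefl.
have [K HK] := HD L.+1 erefl.
exists (L + (1 + (3 + 7 * K) * (L * (L * (2 * B1)))) * (1 + L * (L * B2))).
move=> V e HCe; apply: (core_bound (HC V e HCe)).
- by move=> a b Ha Hb; apply: HF.
- by move=> c Hc; apply: HS.
- exact: HL.
- exact: HK.
Qed.
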